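(* Fix an integer $j\ge 0$. Define a function $\mathrm{suc}$ on triples of integers with $z\ge1$ recursively by \[\mathrm{suc}(x,y,1)=\{(2,y{+}1,1),(3,y{+}1,1),\ldots,(x{+}1,y{+}1,1)\}\cup\{(x,x{+}1,1),(x,x{+}2,1),\ldots,(x,y,1)\}\] (the second set being empty if $y\le x$), and for $z\geq 2$, \[\mathrm{suc}(x,y,z)=\{(2,y{+}1,z),(3,y{+}1,z),\ldots,(x{+}1,y{+}1,z)\}\cup \mathrm{suc}(x,y,z{-}1).\] Let $T$ be the rooted labeled tree whose root has label $(j{+}1,j{+}1,j{+}1)$ and in which a vertex with label $L$ has exactly one child with label $L'$ for each $L'\in \mathrm{suc}(L)$. Then $T$ is isomorphic as a rooted tree to $BT^j(1234)$.
   Context: $B_n$ is the group of permutations $w$ of $\{-n,\ldots,-1,1,\ldots,n\}$ with $w(-i)=-w(i)$; such $w$ is determined by $[w(-n),w(-n+1),\ldots,w(-1)]$. $w$ avoids $1234$ if there are no indices $-n\le a<b<c<d\le n$ (nonzero) with $w(a)<w(b)<w(c)<w(d)$. $B_n^j(1234)$ is the set of $1234$-avoiding $w\in B_n$ with $w(i)>0$ for exactly $j$ indices $i\in\{1,\ldots,n\}$. For $\ell\ge1$ let $\beta_\ell(x)=x$ if $|x|<\ell$, $\beta_\ell(x)=x-1$ if $x<-\ell$, $\beta_\ell(x)=x+1$ if $x>\ell$. For $w\in B_n$, $1\le i\le n+1$ and $1\le \ell\le n+1$, let $w^{-i}_\ell\in B_{n+1}$ be defined by $w^{-i}_\ell(-k)=\beta_\ell(w(-k+1))$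 for $i+1\le k\le n+1$, $w^{-i}_\ell(-i)=\ell$, $w^{-i}_\ell(-k)=\beta_\ell(w(-k))$ for $1\le k\le i-1$, extended by $w^{-i}_\ell(k)=-w^{-i}_\ell(-k)$. The tree $BT^j(1234)$ is the rooted tree whose vertices are signed permutations, with root the element $[-1,-2,\ldots,-j]$ of $B_j$ (i.e. $w(-k)=-(j+1-k)$ for $1\le k\le j$), and in which the children of a vertex $w\in B_n^j(1234)$ are all $w^{-i}_\ell$ with $1\le i\le n+1$ and $m<\ell\le n+1$ that avoid $1234$, where $m=\max(\{w(-k):1\le k\le n\}\cup\{0\})$. *)

(* Defs.v *)
From mathcomp Require Import all_boot all_order all_algebra.
Set Implicit Arguments. Unset Strict Implicit. Unset Printing Implicit Defensive.
Import Order.TTheory GRing.Theory Num.Theory.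
Local Open Scope ring_scope.

(* The rooted tree generated by root r and children ch : a vertex is the
   (unique) path [:: r; a1; ...; ak] from the root, with a_{i+1} \in ch a_i.
   Children are taken as a set (membership), so each label in ch a gives
   exactly one child. *)
Definition is_node (A : eqType) (r : A) (ch : A -> seq A) (p : seq A) : bool :=
  if p is a :: s then (a == r) && path (fun x y => y \in ch x) a s else false.

Definition is_child (A : Type) (p q : seq A) : Prop := exists a, q = rcons p a.

Definition tree_iso (A B : eqType) (rA : A) (chA : A -> seq A)
    (rB : B) (chB : B -> seq B) : Prop :=
  exists (f : seq A -> seq B) (g : seq B -> seq A),
    [/\ forall p, is_node rA chA p -> is_node rB chB (f p) /\ g (f p) = p,
        forall q, is_node rB chB q -> is_node rA chA (g q) /\ f (g q) = q,
        f [:: rA] = [:: rB] &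
        forall p q, is_node rA chA p -> is_node rA chA q ->
          (is_child p q <-> is_child (f p) (f q))].

(* w \in B_n is encoded by s = [:: w(-n); ...; w(-1)] : seq int.
   The full one-line word on positions -n < ... < -1 < 1 < ... < n is
   s ++ [:: w(1); ...; w(n)] = s ++ map -%R (rev s). *)
Definition full_word (s : seq int) : seq int := s ++ map -%R (rev s).

Definition has_incr4 (t : seq int) : bool :=
  [exists a : 'I_(size t), exists b : 'I_(size t), exists c : 'I_(size t),
   exists d : 'I_(size t),
    [&& (a < b)%N, (b < c)%N, (c < d)%N,
        nth 0 t a < nth 0 t b, nth 0 t b < nth 0 t c & nth 0 t c < nth 0 t d]].

Definition avoids1234 (s : seq int) : bool := ~~ has_incr4 (full_word s).

(* beta_l : values of absolute value < l are kept, the others are pushed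
   away from 0 by one (the paper writes x < -l / x > l; the boundary values
   x = -l, x = l must also be shifted so that w^{-i}_l is a signed
   permutation). *)
Definition beta (l : nat) (x : int) : int :=
  if `|x| < l%:Z then x
  else if x < 0 then x - 1
  else x + 1.

(* w^{-i}_l, for w encoded by s of size n, 1 <= i <= n+1 *)
Definition insert_at (s : seq int) (i l : nat) : seq int :=
  let n := size s in
  map (beta l) (take (n.+1 - i) s) ++ (l%:Z :: map (beta l) (drop (n.+1 - i) s)).

Definition maxneg (s : seq int) : nat :=
  foldr maxn 0%N [seq absz x | x <- s & 0 < x].

Definition BT_children (s : seq int) : seq (seq int) :=
  let n := size s in
  let m := maxneg s in
  undup [seq t <- [seq insert_at s i l | i <- iota 1 n.+1, l <- iota m.+1 (n.+1 - m)]
         | avoids1234 t].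

(* root [-1,-2,...,-j] of B_j : w(-k) = -(j+1-k), listed from w(-j) to w(-1) *)
Definition BT_root (j : nat) : seq int := [seq - (k%:Z) | k <- iota 1 j].

Definition irange (a b : int) : seq int :=
  if a <= b then [seq a + k%:Z | k <- iota 0 (absz (b - a + 1))] else [::].

Fixpoint sucN (x y : int) (z : nat) : seq (int * int * int) :=
  match z with
  | 0%N => [::]
  | 1%N => [seq (a, y + 1, 1) | a <- irange 2 (x + 1)]
           ++ [seq (x, b, 1) | b <- irange (x + 1) y]
  | k.+1 => [seq (a, y + 1, z%:Z) | a <- irange 2 (x + 1)] ++ sucN x y k
  end.

Definition suc (L : int * int * int) : seq (int * int * int) :=
  if 1 <= L.2 then sucN L.1.1 L.1.2 (absz L.2) else [::].

Definition T_root (j : nat) : int * int * int := (j.+1%:Z, j.+1%:Z, j.+1%:Z).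

(* Main.v *)
Require Import Defs.
From mathcomp Require Import all_boot all_order all_algebra zify.
Set Implicit Arguments. Unset Strict Implicit. Unset Printing Implicit Defensive.
Import Order.TTheory GRing.Theory Num.Theory.
Local Open Scope ring_scope.

Definition ltopt (lo : option int) (x : int) : bool :=
  if lo is Some b then b < x else true.

Fixpoint inc (t : seq int) (k : nat) (lo : option int) : bool :=
  match k, t with
  | 0%N, _ => true
  | _.+1, [::] => false
  | k'.+1, x :: t' => (ltopt lo x && inc t' k' (Some x)) || inc t' k lo
  end.

Definition chainP (t : seq int) (k : nat) (lo : option int) : Prop :=
  exists c, [/\ size c = k, subseq c t, sorted <%R c & all (ltopt lo) c].

Lemma incP t k lo : reflect (chainP t k lo) (inc t k lo).
Proof.
apply: (iffP idP).
- elim: t k lo => [|x t IH] [|k] lo //=.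
  + by move=> _; exists [::].
  + by move=> _; exists [::].
  case/orP => [/andP[hx /IH [c [hs hsub hsort hall]]]|/IH [c [hs hsub hsort hall]]].
    exists (x :: c); split => //=; first by rewrite hs.
    * by rewrite eqxx.
    * rewrite path_sortedE ?hsort ?andbT //; exact: lt_trans.
    * rewrite hx /=; apply/allP => y /(allP hall) /= hy.
      by case: lo hx {hall} => //= b hb; apply: lt_trans hy.
  exists c; split => //; apply: subseq_trans hsub (subseq_cons _ _).
- elim: t k lo => [|x t IH] [|k] lo //=.
  + by case=> -[|y c] [].
  case=> -[|y c] [//= [hs] hsub hsort /andP[hy hall]].
  move: hsub => /=; case: eqP => [eyx|nyx] hsub.
    subst y; apply/orP; left; rewrite hy /=.
    apply/IH; exists c; split => //; first exact: path_sorted hsort.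
    by move: hsort; rewrite path_sortedE; [case/andP|exact: lt_trans].
  apply/orP; right; apply/IH; exists (y :: c); split => //=.
  - by rewrite hs.
  - by rewrite hy.
Qed.

Definition incr t k := inc t k None.

Lemma incrP t k :
  reflect (exists c, [/\ size c = k, subseq c t & sorted <%R c]) (incr t k).
Proof.
apply: (iffP (incP t k None)).
  by case=> c [h1 h2 h3 _]; exists c.
by case=> c [h1 h2 h3]; exists c; split => //; apply/allP.
Qed.

Lemma incr0 t : incr t 0%N.
Proof. by case: t. Qed.

Lemma incr_nil k : incr [::] k.+1 = false.
Proof. by []. Qed.

Lemma incr1 t : incr t 1%N = (t != [::]).
Proof.
apply/incrP/idP.
  case=> c [hs hsub _]; case: c hs hsub => [|x [|]] //= _.
  by rewrite sub1seq; case: t.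
by case: t => // x t _; exists [:: x]; split => //=; rewrite eqxx sub0seq.
Qed.

Lemma incr_sub t t' k : subseq t t' -> incr t k -> incr t' k.
Proof.
move=> st /incrP [c [h1 h2 h3]]; apply/incrP; exists c; split => //.
exact: subseq_trans st.
Qed.

Lemma incr_le t k k' : (k <= k')%N -> incr t k' -> incr t k.
Proof.
move=> hk /incrP [c [h1 h2 h3]]; apply/incrP; exists (take k c); split.
- by rewrite size_take h1; case: ltngtP hk.
- exact: subseq_trans (take_subseq _ _) h2.
- exact: (subseq_sorted (@lt_trans _ int) (take_subseq _ _) h3).
Qed.

Lemma sorted_mono (f : int -> int) c :
  {mono f : x y / x < y} -> sorted <%R (map f c) = sorted <%R c.
Proof.
move=> mf; rewrite sorted_map; case: c => //= x c.
by apply: eq_path => a b /=; rewrite mf.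
Qed.

Lemma incr_map (f : int -> int) t k :
  {mono f : x y / x < y} -> incr (map f t) k = incr t k.
Proof.
move=> mf; apply/incrP/incrP => -[c [h1 h2 h3]].
  case/subseqP: h2 => m hm ec; subst c; rewrite -map_mask in h1 h3.
  exists (mask m t); split => //; first by rewrite size_map in h1.
    exact: mask_subseq.
  by rewrite sorted_mono in h3.
exists (map f c); split; first by rewrite size_map.
  exact: map_subseq.
by rewrite sorted_mono.
Qed.

Lemma incr_revneg1 t k : incr t k -> incr (map -%R (rev t)) k.
Proof.
move/incrP => -[c [h1 h2 h3]]; apply/incrP; exists (map -%R (rev c)); split.
- by rewrite size_map size_rev.
- by apply: map_subseq; rewrite subseq_rev.
- rewrite sorted_map rev_sorted; case: c h3 {h1 h2} => //= x c.
  by move=> h; rewrite (@eq_path _ _ <%R) => [//|a b /=]; rewrite ltrN2.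
Qed.

Lemma incr_revneg t k : incr (map -%R (rev t)) k = incr t k.
Proof.
apply/idP/idP; last exact: incr_revneg1.
move/incr_revneg1; rewrite map_rev revK -map_comp.
by rewrite (eq_map (g := id)) ?map_id // => x /=; rewrite opprK.
Qed.

Lemma subseq_catP (c s1 s2 : seq int) : subseq c (s1 ++ s2) ->
  exists c1 c2, [/\ c = c1 ++ c2, subseq c1 s1 & subseq c2 s2].
Proof.
elim: s1 c => [|x s1 IH] c /=; first by move=> h; exists [::], c.
case: c => [|y c]; first by move=> _; exists [::], [::]; rewrite !sub0seq.
case: eqP => [-> | nyx] h.
  have [c1 [c2 [-> h1 h2]]] := IH _ h.
  by exists (x :: c1), c2; split => //=; rewrite eqxx.
have [c1 [c2 [e h1 h2]]] := IH _ h.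
exists c1, c2; split => //; exact: subseq_trans h1 (subseq_cons _ _).
Qed.

Lemma pivot (x : int) (c1 c2 s3 s4 : seq int) : x \notin s3 -> x \notin s4 ->
  subseq (c1 ++ x :: c2) (s3 ++ x :: s4) -> subseq c1 s3 /\ subseq c2 s4.
Proof.
elim: s3 c1 => [|z s3 IH] c1 /= hx3 hx4.
  case: c1 => [|y c1] /=; first by rewrite eqxx.
  case: eqP => [->|_] /mem_subseq h; case/negP: hx4; apply: h;
    by rewrite ?inE ?mem_cat ?inE ?eqxx ?orbT.
move: hx3; rewrite inE negb_or => /andP[xz hx3].
case: c1 => [|y c1] /=.
  case: eqP => [exz|_]; first by rewrite exz eqxx in xz.
  by move=> h; have [_ ?] := IH [::] hx3 hx4 h; split => //; apply: sub0seq.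
case: (y =P z) => [eyz|nyz] h.
  subst y; rewrite /= ?eqxx in h *; have [? ?] := IH c1 hx3 hx4 h; split => //=; rewrite ?eqxx //.
by have [h1 h2] := IH (y :: c1) hx3 hx4 h; split.
Qed.

Lemma small_chain (c d : seq int) : subseq c d -> sorted <%R c -> sorted >%R d ->
  (size c <= 1)%N.
Proof.
move=> h1 h2 h3.
have gtt : transitive (>%R : rel int) by move=> y x z u v; apply: lt_trans v u.
have h4 := subseq_sorted gtt h1 h3.
case: c h2 h4 {h1} => [|x [|y c]] //= /andP[hxy _] /andP[hyx _].
by move: (lt_trans hxy hyx); rewrite ltxx.
Qed.

Lemma incr_top (A B : seq int) (x : int) k :
  (forall y, y \in A ++ B -> y < x) ->
  incr (A ++ x :: B) k.+1 = incr (A ++ B) k.+1 || incr A k.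
Proof.
move=> hlt.
have xA : x \notin A by apply/negP => h; have := hlt x; rewrite mem_cat h ltxx => /(_ isT).
have xB : x \notin B by apply/negP => h; have := hlt x; rewrite mem_cat h orbT ltxx => /(_ isT).
apply/idP/orP.
- move/incrP => [c [hs hsub hsort]].
  case: (boolP (x \in c)) => xc.
  + case/splitPr: xc hs hsub hsort => c1 c2 hs hsub hsort.
    have [s1 s2] := pivot xA xB hsub.
    case: c2 hs hsub hsort s2 => [|y c2] hs hsub hsort s2.
      right; apply/incrP; exists c1; split => //.
        by move: hs; rewrite size_cat /= addn1 => -[].
      exact: (cat_sorted2 hsort).1.
    have := (cat_sorted2 hsort).2 => /= /andP[hxy _].
    have : y \in B by apply: (mem_subseq s2); rewrite inE eqxx.
    move=> yB; have := hlt y; rewrite mem_cat yB orbT => /(_ isT) hyx.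
    by move: (lt_trans hxy hyx); rewrite ltxx.
  + left; apply/incrP; exists c; split => //.
    have : subseq c (filter (predC1 x) (A ++ x :: B)).
      rewrite subseq_filter hsub andbT; apply/allP => y yc /=.
      by apply/eqP => eyx; move: yc; rewrite eyx (negbTE xc).
    rewrite filter_cat /= eqxx /=.
    by rewrite (all_filterP _) ?(all_filterP _) //; apply/allP => y hy /=;
       apply/eqP => e; subst y; [rewrite hy in xB | rewrite hy in xA].
- case=> h.
    by apply: incr_sub h; apply: cat_subseq (subseq_refl _) (subseq_cons _ _).
  move/incrP: h => [c [hs hsub hsort]]; apply/incrP; exists (rcons c x); split.
  + by rewrite size_rcons hs.
  + by rewrite -cats1; apply: cat_subseq hsub _; rewrite /= eqxx sub0seq.
  + case: c hs hsub hsort => [//|y c] /= hs hsub hsort.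
    rewrite rcons_path hsort /=; apply: hlt; rewrite mem_cat; apply/orP; left.
    by apply: (mem_subseq hsub); apply: mem_last.
Qed.

Lemma sub_nth (s c : seq int) i : (i < size s)%N -> subseq c (drop i.+1 s) ->
  subseq (nth 0 s i :: c) s.
Proof.
elim: s i => [|y s IH] [|i] //=; first by move=> _ h; rewrite eqxx drop0 in h *.
move=> hi h; case: eqP => [e|_]; last exact: IH.
exact: cons_subseq (IH i hi h).
Qed.

Lemma sub_nth_drop (s c : seq int) h i : (h <= i)%N -> (i < size s)%N ->
  subseq c (drop i.+1 s) -> subseq (nth 0 s i :: c) (drop h s).
Proof.
move=> hh hi hc.
have := @sub_nth (drop h s) c (i - h).
rewrite nth_drop drop_drop size_drop subnKC // => -> //.
  by rewrite ltn_sub2r // (leq_ltn_trans hh hi).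
by rewrite addSn subnK.
Qed.

Lemma nth_of_sub (s c : seq int) x : subseq (x :: c) s ->
  exists i, [/\ (i < size s)%N, nth 0 s i = x & subseq c (drop i.+1 s)].
Proof.
elim: s => [|y s IH] //=.
case: eqP => [-> h|_ /IH [i [h1 h2 h3]]]; first by exists 0%N; rewrite drop0.
by exists i.+1.
Qed.

Lemma nth_of_sub_drop (s c : seq int) x h : subseq (x :: c) (drop h s) ->
  exists i, [/\ (h <= i)%N, (i < size s)%N, nth 0 s i = x & subseq c (drop i.+1 s)].
Proof.
move/nth_of_sub => [i [h1 h2 h3]]; exists (h + i)%N; split.
- exact: leq_addr.
- by move: h1; rewrite size_drop; lia.
- by rewrite -nth_drop.
- by move: h3; rewrite drop_drop addSn addnC.
Qed.

Lemma has4 t : has_incr4 t = incr t 4%N.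
Proof.
apply/idP/idP.
- case/existsP => a /existsP [b /existsP [c /existsP [d /andP [hab /andP [hbc /andP [hcd /andP [v1 /andP [v2 v3]]]]]]]].
  apply/incrP; exists [:: nth 0 t a; nth 0 t b; nth 0 t c; nth 0 t d]; split => //;
    last by rewrite /= v1 v2 v3.
  suff : subseq [:: nth 0 t a; nth 0 t b; nth 0 t c; nth 0 t d] (drop 0 t) by rewrite drop0.
  apply: sub_nth_drop => //.
  apply: sub_nth_drop => //; apply: sub_nth_drop => //; apply: sub_nth_drop => //.
  exact: sub0seq.
- move/incrP => [cc [hs hsub hsort]].
  case: cc hs hsub hsort => [|x1 [|x2 [|x3 [|x4 [|? ?]]]]] // _ hsub hsort.
  rewrite -(drop0 t) in hsub.
  have [a [_ ha ea hsa]] := nth_of_sub_drop hsub.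
  have [b [hab hb eb hsb]] := nth_of_sub_drop hsa.
  have [c [hbc hc ec hsc]] := nth_of_sub_drop hsb.
  have [d [hcd hd ed _]] := nth_of_sub_drop hsc.
  apply/existsP; exists (Ordinal ha); apply/existsP; exists (Ordinal hb).
  apply/existsP; exists (Ordinal hc); apply/existsP; exists (Ordinal hd).
  by rewrite /= ea eb ec ed hab hbc hcd; move: hsort => /= /and4P [-> -> -> _].
Qed.

Section Beta.
Variable l : nat.
Hypothesis l0 : (0 < l)%N.

Lemma beta_mono : {mono beta l : x y / x < y}.
Proof. move=> x y; rewrite /beta; repeat case: ifP; lia. Qed.

Lemma beta_neqp x : beta l x != l%:Z.
Proof. rewrite /beta; repeat case: ifP; lia. Qed.

Lemma beta_neqn x : beta l x != - l%:Z.
Proof. rewrite /beta; repeat case: ifP; lia. Qed.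

Lemma betaN x : beta l (- x) = - beta l x.
Proof. rewrite /beta; repeat case: ifP; lia. Qed.

Lemma beta_ge x : x - 1 <= beta l x.
Proof. rewrite /beta; repeat case: ifP; lia. Qed.

Lemma beta_small x : `|x| < l%:Z -> beta l x = x.
Proof. rewrite /beta; repeat case: ifP; lia. Qed.

Lemma beta_ltn x : (beta l x < - l%:Z) = (x <= - l%:Z).
Proof. rewrite /beta; repeat case: ifP; lia. Qed.

Lemma beta_gtp x : (l%:Z < beta l x) = (l%:Z <= x).
Proof. rewrite /beta; repeat case: ifP; lia. Qed.

Lemma beta_le_pos x : x <= - l%:Z -> beta l x = x - 1.
Proof. rewrite /beta; repeat case: ifP; lia. Qed.

Lemma beta_ge_pos x : l%:Z <= x -> beta l x = x + 1.
Proof. rewrite /beta; repeat case: ifP; lia. Qed.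

Lemma beta_lt_top x : x < l%:Z -> beta l x < l%:Z.
Proof. rewrite /beta; repeat case: ifP; lia. Qed.

End Beta.

Lemma maxneg_cons x s :
  maxneg (x :: s) = if 0 < x then maxn (absz x) (maxneg s) else maxneg s.
Proof. by rewrite /maxneg /=; case: ifP. Qed.

Lemma maxneg_ge s x : x \in s -> 0 < x -> x <= (maxneg s)%:Z.
Proof.
elim: s => [|y s IH] //; rewrite inE maxneg_cons => /orP [/eqP ->|xs] hx.
  by rewrite hx; lia.
have := IH xs hx; case: ifP => _; lia.
Qed.

Lemma maxneg_le s b : (forall x, x \in s -> 0 < x -> x <= b%:Z) -> (maxneg s <= b)%N.
Proof.
elim: s => [|y s IH] //= h; rewrite maxneg_cons.
have h2 : (maxneg s <= b)%N by apply: IH => x xs; apply: h; rewrite inE xs orbT.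
case: ifP => // hy; have := h y (mem_head _ _) hy; lia.
Qed.

Definition ins (s : seq int) (p l : nat) : seq int :=
  map (beta l) (take p s) ++ (l%:Z :: map (beta l) (drop p s)).

Lemma insert_atE s i l : insert_at s i l = ins s ((size s).+1 - i) l.
Proof. by []. Qed.

Lemma size_ins s p l : (p <= size s)%N -> size (ins s p l) = (size s).+1.
Proof.
move=> hp; rewrite /ins size_cat /= !size_map size_take size_drop.
case: ltngtP hp => // h _; lia.
Qed.

Lemma map_beta_revneg l (t : seq int) : (0 < l)%N ->
  map -%R (rev (map (beta l) t)) = map (beta l) (map -%R (rev t)).
Proof.
move=> l0; rewrite !map_rev -!map_comp; congr rev; apply: eq_map => x /=.
by rewrite betaN.
Qed.

Lemma full_word_ins s p l : (0 < l)%N ->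
  full_word (ins s p l) =
  map (beta l) (take p s) ++ l%:Z ::
   (map (beta l) (drop p s ++ map -%R (rev (drop p s))) ++
     - l%:Z :: map (beta l) (map -%R (rev (take p s)))).
Proof.
move=> l0; rewrite /full_word /ins -catA /=.
rewrite rev_cat rev_cons map_cat map_rcons map_cat -cats1 -catA /=.
by rewrite !map_beta_revneg // -catA.
Qed.

Lemma full_word_split s p :
  full_word s = take p s ++ (drop p s ++ map -%R (rev (drop p s))) ++
                map -%R (rev (take p s)).
Proof.
rewrite /full_word.
transitivity ((take p s ++ drop p s) ++ map -%R (rev (take p s ++ drop p s))).
  by rewrite cat_take_drop.
by rewrite rev_cat map_cat !catA.
Qed.

Definition Inv (s : seq int) : Prop :=
  [/\ avoids1234 s,
      forall x, x \in s -> - (size s)%:Z <= x,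
      sorted >%R [seq x <- s | x < - (maxneg s)%:Z],
      (maxneg s <= size s)%N &
      ((maxneg s < size s)%N -> exists2 x, x \in s & x <= - (size s)%:Z)].

Lemma gt_transitive : transitive (>%R : rel int).
Proof. by move=> y x z u v; apply: lt_trans v u. Qed.

Lemma sorted_split (c1 c2 : seq int) x : sorted <%R (c1 ++ x :: c2) ->
  [/\ forall y, y \in c1 -> y < x, forall y, y \in c2 -> x < y,
      sorted <%R c1 & sorted <%R c2].
Proof.
rewrite !sorted_pairwise; try exact: lt_trans.
rewrite pairwise_cat pairwise_cons allrel_consr => /and4P [/andP [h1 _] h2 h3 h4].
split => //.
- by move=> y /(allP h1).
- by move=> y /(allP h3).
Qed.

Lemma incr_ext (X W : seq int) x k : (forall y, y \in X -> y < x) ->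
  incr X k -> incr (X ++ x :: W) k.+1.
Proof.
move=> hlt /incrP [c [hs hsub hsort]]; apply/incrP; exists (rcons c x); split.
- by rewrite size_rcons hs.
- by rewrite -cats1; apply: cat_subseq hsub _; rewrite /= eqxx sub0seq.
- case: c hs hsub hsort => [//|y c] /= hs hsub hsort.
  rewrite rcons_path hsort /=; apply: hlt.
  by apply: (mem_subseq hsub); apply: mem_last.
Qed.

Lemma incr_ext2 (X W : seq int) x z k : (forall y, y \in X -> y < x) ->
  z \in W -> x < z -> incr X k -> incr (X ++ x :: W) k.+2.
Proof.
move=> hlt zW xz /incrP [c [hs hsub hsort]]; apply/incrP; exists (c ++ [:: x; z]); split.
- by rewrite size_cat hs addn2.
- apply: cat_subseq hsub _; rewrite /= eqxx; by rewrite sub1seq.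
- rewrite sorted_cat_cons /= xz andbT.
  case: c hs hsub hsort => [//|y c] /= hs hsub hsort.
  rewrite rcons_path hsort /= andbT; apply: hlt.
  by apply: (mem_subseq hsub); apply: mem_last.
Qed.

Lemma sorted_gt_beta l (V : seq int) : (0 < l)%N ->
  sorted >%R V -> sorted >%R (map (beta l) V).
Proof.
move=> l0; rewrite sorted_map; case: V => //= a V; apply: sub_path => u v /=.
by rewrite beta_mono.
Qed.

Lemma sorted_gt_revneg (V : seq int) : sorted >%R V -> sorted >%R (map -%R (rev V)).
Proof.
rewrite sorted_map rev_sorted; case: V => //= a V; apply: sub_path => u v /=.
by rewrite ltrN2.
Qed.

Lemma incr_ins s p l : Inv s -> (p <= size s)%N -> (maxneg s < l)%N ->
  (l <= (size s).+1)%N ->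
  incr (full_word (ins s p l)) 4%N =
  (if l == (size s).+1 then incr (take p s) 3%N else incr (take p s) 2%N).
Proof.
case=> hav hlow hsrt hmn hex hp hml hln.
have l0 : (0 < l)%N by lia.
have sl : forall x, x \in s -> x < l%:Z.
  move=> x xs; case: (boolP (0 < x)) => hx; last lia.
  by have := maxneg_ge xs hx; lia.
set A := take p s; set B := drop p s.
have As : forall x, x \in A -> x \in s by move=> x; apply: mem_take.
have Bs : forall x, x \in B -> x \in s by move=> x; apply: mem_drop.
set F := [seq x <- s | x <= - l%:Z].
have hF : sorted >%R F.
  have -> : F = [seq x <- [seq x <- s | x < - (maxneg s)%:Z] | x <= - l%:Z].
    by rewrite -filter_predI; apply: eq_filter => x /=; lia.
  exact: sorted_filter gt_transitive _ _ hsrt.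
have hF0 : l = (size s).+1 -> F = [::].
  move=> e; rewrite /F (@eq_in_filter _ _ pred0) ?filter_pred0 // => x xs /=.
  by have := hlow x xs; lia.
rewrite full_word_ins //.
set X := map (beta l) A.
set Y := map (beta l) (B ++ map -%R (rev B)).
set Z := map (beta l) (map -%R (rev A)).
have mb : forall (V : seq int) y, y \in map (beta l) V -> (y != l%:Z) && (y != - l%:Z).
  by move=> V y /mapP [v _ ->]; rewrite beta_neqp ?beta_neqn.
have XYZ : X ++ Y ++ Z = map (beta l) (full_word s) by rewrite (full_word_split s p) /X /Y /Z -!map_cat.
have hX : forall y, y \in X -> y < l%:Z.
  by move=> y /mapP [v /As vs ->]; apply: beta_lt_top => //; apply: sl.
have rs : map -%R (rev B) ++ map -%R (rev A) = map -%R (rev s).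
  by rewrite -map_cat -rev_cat cat_take_drop.
have fW : [seq y <- Y ++ - l%:Z :: Z | l%:Z < y] = map (beta l) (map -%R (rev F)).
  rewrite filter_cat /= ifN; last lia.
  rewrite /Y /Z -filter_cat -map_cat filter_map; congr map.
  rewrite (@eq_filter _ _ (fun y => l%:Z <= y)); last by move=> y /=; rewrite beta_gtp.
  rewrite -catA filter_cat (@eq_in_filter _ _ pred0 B) ?filter_pred0 /=; last first.
    by move=> y /Bs ys /=; have := sl y ys; lia.
  rewrite rs /F filter_map filter_rev; congr (map _ (rev _)).
  by apply: eq_filter => y /=; lia.
have fXY : [seq y <- X ++ l%:Z :: Y | y < - l%:Z] = map (beta l) F.
  rewrite filter_cat /= ifN; last lia.
  rewrite /X /Y -filter_cat -map_cat filter_map; congr map.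
  rewrite (@eq_filter _ _ (fun y => y <= - l%:Z)); last by move=> y /=; rewrite beta_ltn.
  rewrite catA cat_take_drop filter_cat (@eq_in_filter _ _ pred0 (map -%R (rev B)))
    ?filter_pred0 ?cats0 //.
  move=> y /mapP [v]; rewrite mem_rev => /Bs vs -> /=; have := sl v vs; lia.
have hG : sorted >%R (map (beta l) (map -%R (rev F))).
  by apply: sorted_gt_beta => //; apply: sorted_gt_revneg.
have hG' : sorted >%R (map (beta l) F) by apply: sorted_gt_beta.
have bm := beta_mono l0.
apply/idP/idP.
- move/incrP => [c [hs hsub hsort]].
  case: (boolP (l%:Z \in c)) => lc.
  + case/splitPr: lc hs hsub hsort => c1 c2 hs hsub hsort.
    have nX : l%:Z \notin X by apply/negP => /mb; rewrite eqxx.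
    have nW : l%:Z \notin Y ++ - l%:Z :: Z.
      apply/negP; rewrite mem_cat inE => /orP [/mb|/orP [/eqP|/mb]]; rewrite ?eqxx //; lia.
    have [s1 s2] := pivot nX nW hsub.
    have [_ hc2 hs1 hs2] := sorted_split hsort.
    have s2' : subseq c2 (map (beta l) (map -%R (rev F))).
      by rewrite -fW subseq_filter s2 andbT; apply/allP.
    have sz2 := small_chain s2' hs2 hG.
    have iA : incr A (size c1).
      by rewrite -(@incr_map (beta l)) //; apply/incrP; exists c1.
    move: hs; rewrite size_cat /= => hs.
    case: eqP => hl.
      have c20 : c2 = [::] by move: s2'; rewrite hF0 // subseq0 => /eqP.
      have e3 : size c1 = 3%N by move: hs; rewrite c20 /= addn1 => -[].
      by rewrite -e3.
    apply: (incr_le _ iA); clear -hs sz2; move: hs sz2; move: (size c1) (size c2) => a b; lia.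
  + case: (boolP (- l%:Z \in c)) => nlc.
    * have e : X ++ l%:Z :: (Y ++ - l%:Z :: Z) = (X ++ l%:Z :: Y) ++ - l%:Z :: Z
        by rewrite -catA.
      rewrite e in hsub.
      case/splitPr: nlc hs hsub hsort => c1 c2 hs hsub hsort.
      have n1 : - l%:Z \notin X ++ l%:Z :: Y.
        apply/negP; rewrite mem_cat inE => /orP [/mb|/orP [/eqP|/mb]];
          rewrite ?eqxx ?andbF //; lia.
      have n2 : - l%:Z \notin Z by apply/negP => /mb; rewrite eqxx andbF.
      have [s1 s2] := pivot n1 n2 hsub.
      have [hc1 _ hs1 hs2] := sorted_split hsort.
      have s1' : subseq c1 (map (beta l) F).
        by rewrite -fXY subseq_filter s1 andbT; apply/allP.
      have sz1 := small_chain s1' hs1 hG'.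
      have iA : incr A (size c2).
        by rewrite -incr_revneg -(@incr_map (beta l)) //; apply/incrP; exists c2.
      move: hs; rewrite size_cat /= => hs.
      case: eqP => hl.
        have c10 : c1 = [::] by move: s1'; rewrite hF0 // subseq0 => /eqP.
        have e3 : size c2 = 3%N by move: hs; rewrite c10 /= => -[].
        by rewrite -e3.
      apply: (incr_le _ iA); clear -hs sz1; move: hs sz1; move: (size c1) (size c2) => a b; lia.
    * exfalso.
      have hsub2 : subseq c (map (beta l) (full_word s)).
        rewrite -XYZ.
        have <- : [seq y <- X ++ l%:Z :: (Y ++ - l%:Z :: Z) | (y != l%:Z) && (y != - l%:Z)]
                  = X ++ Y ++ Z.
          rewrite filter_cat /= eqxx /= filter_cat /= eqxx andbF /=.
          by rewrite !(all_filterP _) //; apply/allP => y /mb.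
        rewrite subseq_filter hsub andbT; apply/allP => y yc; apply/andP; split;
          apply/eqP => ey; subst y; [by rewrite yc in lc | by rewrite yc in nlc].
      move: hav; rewrite /avoids1234 has4 => /negP; apply.
      by rewrite -(@incr_map (beta l)) //; apply/incrP; exists c.
- case: eqP => hl h.
  + by apply: incr_ext => //; rewrite /X (@incr_map (beta l)).
  + have [w ws hwn] : exists2 w, w \in s & w <= - (size s)%:Z by apply: hex; lia.
    apply: (@incr_ext2 _ _ _ (beta l (- w))) => //.
    * have hw : - w \in map -%R (rev B) ++ map -%R (rev A) by rewrite rs map_f // mem_rev.
      rewrite mem_cat in hw; rewrite mem_cat inE; case/orP: hw => h1.
        by apply/orP; left; apply: map_f; rewrite mem_cat h1 orbT.
      by apply/orP; right; apply/orP; right; apply: map_f.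
    * rewrite beta_gtp //; lia.
    * by rewrite /X (@incr_map (beta l)).
Qed.

Lemma count_lt_iota N c : (c <= N.+1)%N ->
  count (fun q => (q < c)%N) (iota 0 N.+1) = c.
Proof.
move=> hc; rewrite -(subnKC hc) iotaD count_cat add0n.
rewrite (@eq_in_count _ _ predT (iota 0 c)); last first.
  by move=> q; rewrite mem_iota add0n /= => ->.
rewrite count_predT size_iota (@eq_in_count _ _ pred0); last first.
  by move=> q; rewrite mem_iota /= => /andP [h _]; rewrite ltnNge h.
by rewrite count_pred0 addn0.
Qed.

Lemma cnt_char (P : pred nat) N c : (forall q, (q <= N)%N -> P q = (q < c)%N) ->
  (c <= N.+1)%N -> count P (iota 0 N.+1) = c.
Proof.
move=> h hc; rewrite -(count_lt_iota hc); apply: eq_in_count => q.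
by rewrite mem_iota add0n ltnS => /h.
Qed.

Lemma cnt_dc (P : pred nat) N : (forall q q', (q <= q')%N -> P q' -> P q) ->
  forall q, (q <= N)%N -> P q = (q < count P (iota 0 N.+1))%N.
Proof.
move=> dc; elim: N => [|N IH] q hq.
  by move: hq; rewrite leqn0 => /eqP ->; rewrite /=; case: (P 0%N).
have hsz : (count P (iota 0 N.+1) <= N.+1)%N.
  by rewrite -[X in (_ <= X)%N](size_iota 0 N.+1) count_size.
have -> : iota 0 N.+2 = iota 0 N.+1 ++ [:: N.+1] by rewrite -[N.+2]addn1 iotaD.
rewrite count_cat [count _ [:: _]]/= addn0.
case: (boolP (P N.+1)) => hP.
  have hall : count P (iota 0 N.+1) = N.+1.
    apply: cnt_char => // r hr; rewrite ltnS hr; exact: (dc r N.+1 (leqW hr) hP).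
  rewrite hall [nat_of_bool _]/= addn1 ltnS hq; exact: (dc q N.+1 hq hP).
rewrite [nat_of_bool _]/= addn0; case: (ltngtP q N.+1) hq => // [hlt|->] _.
  by rewrite IH.
by rewrite (negbTE hP) ltnNge hsz.
Qed.

Definition xs (s : seq int) : nat :=
  count (fun q => ~~ incr (take q s) 2%N) (iota 0 (size s).+1).
Definition ys (s : seq int) : nat :=
  count (fun q => ~~ incr (take q s) 3%N) (iota 0 (size s).+1).
Definition lab (s : seq int) : int * int * int :=
  ((xs s)%:Z, (ys s)%:Z, ((size s).+1 - maxneg s)%N%:Z).

Lemma dc_take s k : forall q q', (q <= q')%N -> ~~ incr (take q' s) k -> ~~ incr (take q s) k.
Proof.
move=> q q' h; apply: contra; apply: incr_sub.
rewrite -(take_takel s h); exact: take_subseq.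
Qed.

Lemma xsP s q : (q <= size s)%N -> (~~ incr (take q s) 2%N) = (q < xs s)%N.
Proof. by move=> hq; rewrite /xs -(@cnt_dc (fun q => ~~ incr (take q s) 2%N) (size s)) //; apply: dc_take. Qed.

Lemma ysP s q : (q <= size s)%N -> (~~ incr (take q s) 3%N) = (q < ys s)%N.
Proof. by move=> hq; rewrite /ys -(@cnt_dc (fun q => ~~ incr (take q s) 3%N) (size s)) //; apply: dc_take. Qed.

Lemma xs_pos s : (0 < xs s)%N.
Proof. by rewrite -xsP // take0. Qed.

Lemma xs_le_ys s : (xs s <= ys s)%N.
Proof.
apply: sub_count => q /=; apply: contra; exact: incr_le.
Qed.

Lemma ys_le s : (ys s <= (size s).+1)%N.
Proof. by rewrite /ys -[X in (_ <= X)%N](size_iota 0) count_size. Qed.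

Lemma s_lt s l : (maxneg s < l)%N -> forall x, x \in s -> x < l%:Z.
Proof.
move=> hml x xs; case: (boolP (0 < x)) => hx; last lia.
by have := maxneg_ge xs hx; lia.
Qed.

Lemma take_ins_lo s p l q k : (0 < l)%N -> (p <= size s)%N -> (q <= p)%N ->
  incr (take q (ins s p l)) k = incr (take q s) k.
Proof.
move=> l0 hp hq; rewrite /ins takel_cat; last by rewrite size_map size_takel.
by rewrite -map_take take_takel // (@incr_map (beta l)) //; apply: beta_mono.
Qed.

Lemma take_ins_hi s p l r k : (p <= size s)%N -> (maxneg s < l)%N ->
  incr (take (p + r.+1) (ins s p l)) k.+1 =
  incr (take (p + r) s) k.+1 || incr (take p s) k.
Proof.
move=> hp hml; have l0 : (0 < l)%N by lia.
have hsz : size (map (beta l) (take p s)) = p by rewrite size_map size_takel.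
rewrite /ins take_cat hsz ltnNge leq_addr /= addKn /= -map_take.
rewrite incr_top; last first.
  move=> y; rewrite mem_cat => /orP [] /mapP [v hv ->]; apply: beta_lt_top => //;
  apply: (s_lt hml); [exact: mem_take hv | exact: mem_drop (mem_take hv)].
by rewrite -map_cat -takeD !(@incr_map (beta l)) //; apply: beta_mono.
Qed.

Lemma maxneg_ins s p l : (p <= size s)%N -> (maxneg s < l)%N -> maxneg (ins s p l) = l.
Proof.
move=> hp hml; have l0 : (0 < l)%N by lia.
apply/anti_leq/andP; split.
  apply: maxneg_le => x; rewrite /ins mem_cat inE => /orP [/mapP [v hv ->]|/orP [/eqP ->|/mapP [v hv ->]]] _ //.
  - by apply/ltW/beta_lt_top => //; apply: (s_lt hml); exact: mem_take hv.
  - by apply/ltW/beta_lt_top => //; apply: (s_lt hml); exact: mem_drop hv.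
have := @maxneg_ge (ins s p l) l%:Z.
rewrite /ins mem_cat inE eqxx orbT /= => /(_ isT).
have -> : (0 < l%:Z) = true by lia.
move=> /(_ isT); lia.
Qed.

Lemma xs_ins s p l : (p <= size s)%N -> (maxneg s < l)%N ->
  xs (ins s p l) = if p == 0%N then (xs s).+1 else if (p < xs s)%N then p.+1 else xs s.
Proof.
move=> hp hml; have l0 : (0 < l)%N by lia.
have x1 := xs_pos s.
have xle : (xs s <= (size s).+1)%N := leq_trans (xs_le_ys s) (ys_le s).
rewrite [xs (ins _ _ _)]/xs size_ins //; apply: cnt_char; last first.
  by case: ifP => _; [|case: ifP => _]; lia.
move=> q hq; case: (leqP q p) => hqp.
  rewrite take_ins_lo // (xsP (q := q)) ?(leq_trans hqp hp) //.
  case: (p =P 0%N) => [p0|pn0].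
    by subst p; move: hqp; rewrite leqn0 => /eqP ->; rewrite x1.
  case: ifP => hpx //; by rewrite (leq_ltn_trans hqp hpx) ltnS hqp.
have -> : q = (p + (q - p).-1.+1)%N by lia.
rewrite take_ins_hi // incr1 -size_eq0 size_takel // negb_or negbK.
rewrite (xsP (q := (p + (q - p).-1)%N)); last lia.
case: (p =P 0%N) => [->|pn0]; first by rewrite andbT !add0n ltnS.
rewrite andbF; case: ifP => h; apply/esym/negbTE; rewrite -leqNgt; lia.
Qed.

Lemma ys_ins s p l : (p <= size s)%N -> (maxneg s < l)%N -> (p < ys s)%N ->
  ys (ins s p l) = if (p < xs s)%N then (ys s).+1 else p.+1.
Proof.
move=> hp hml hpy; have l0 : (0 < l)%N by lia.
have yle := ys_le s.
rewrite [ys (ins _ _ _)]/ys size_ins //; apply: cnt_char; last first.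
  by case: ifP => _; lia.
move=> q hq; case: (leqP q p) => hqp.
  rewrite take_ins_lo // (ysP (q := q)) ?(leq_trans hqp hp) //.
  rewrite (leq_ltn_trans hqp hpy); case: ifP => _; apply/esym; lia.
have -> : q = (p + (q - p).-1.+1)%N by lia.
rewrite take_ins_hi // negb_or (xsP hp).
rewrite (ysP (q := (p + (q - p).-1)%N)); last lia.
case: ifP => h; rewrite ?andbT ?andbF; [apply/idP/idP|apply/esym/negbTE]; lia.
Qed.

Lemma mem_children s t : Inv s ->
  (t \in BT_children s) <-> exists p l, [/\ (p <= size s)%N, (maxneg s < l)%N,
      (l <= (size s).+1)%N,
      (if l == (size s).+1 then (p < ys s)%N else (p < xs s)%N) & t = ins s p l].
Proof.
move=> hI; have hI' := hI; case: hI' => _ _ _ hmn _.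
rewrite /BT_children mem_undup mem_filter; split.
- case/andP => hav /allpairsP [[i l] [hi hl e]]; subst t.
  move: hi hl hav; rewrite !mem_iota /= => hi hl hav.
  have hln : (l <= (size s).+1)%N by lia.
  have hml : (maxneg s < l)%N by lia.
  exists ((size s).+1 - i)%N, l; split => //; first by lia.
  move: hav; rewrite insert_atE /avoids1234 has4 incr_ins //; last lia.
  by case: eqP => _; rewrite ?xsP ?ysP //; lia.
- case=> p [l [hp hml hln hv ->]].
  apply/andP; split.
    rewrite /avoids1234 has4 incr_ins //.
    by case: eqP hv => _; rewrite ?xsP ?ysP.
  apply/allpairsP; exists ((size s).+1 - p, l)%N; split.
  + rewrite mem_iota /=; lia.
  + rewrite mem_iota /=; lia.
  + rewrite /= insert_atE subKn //; lia.
Qed.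

Lemma mem_irange (a lo hi : int) : (a \in irange lo hi) = (lo <= a <= hi).
Proof.
rewrite /irange; case: ifP => hlh.
  apply/mapP/idP.
    by case=> k; rewrite mem_iota => /andP [_ hk] ->; lia.
  move=> /andP [h1 h2]; exists (absz (a - lo)); last lia.
  rewrite mem_iota; lia.
by rewrite in_nil; apply/esym/negbTE; lia.
Qed.

Lemma mem_sucN (x y : nat) z L : (0 < z)%N ->
  L \in sucN x%:Z y%:Z z <->
  (exists k a : nat, [/\ (1 <= k <= z)%N, (2 <= a <= x.+1)%N & L = (a%:Z, y.+1%:Z, k%:Z)])
  \/ (exists b : nat, (x.+1 <= b <= y)%N /\ L = (x%:Z, b%:Z, 1)).
Proof.
elim: z => [|[|z] IH] // _.
- rewrite /= mem_cat; split.
  + case/orP => /mapP [a]; rewrite mem_irange => ha ->.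
      left; exists 1%N, (absz a); split; [lia | lia | congr (_, _, _); lia].
    right; exists (absz a); split; first lia.
    congr (_, _, _); lia.
  + case=> [[k [a [hk ha ->]]]|[b [hb ->]]]; apply/orP.
      left; apply/mapP; exists a%:Z; first by rewrite mem_irange; lia.
      have -> : k = 1%N by lia.
      congr (_, _, _); lia.
    right; apply/mapP; exists b%:Z; first by rewrite mem_irange; lia.
    congr (_, _, _); lia.
- have IH' := IH isT.
  have -> : sucN x%:Z y%:Z z.+2 =
    [seq (a, y%:Z + 1, z.+2%:Z) | a <- irange 2 (x%:Z + 1)] ++ sucN x%:Z y%:Z z.+1 by [].
  rewrite mem_cat; split.
  + case/orP.
      case/mapP => a; rewrite mem_irange => ha ->.
      left; exists z.+2, (absz a); split; [lia | lia | congr (_, _, _); lia].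
    move/IH' => [[k [a [hk ha ->]]]|hb]; last by right.
    by left; exists k, a; split => //; lia.
  + case=> [[k [a [hk ha eL]]]|hb]; apply/orP.
      case: (k =P z.+2) => [ek|nk].
        left; apply/mapP; exists a%:Z; first by rewrite mem_irange; lia.
        rewrite eL ek; congr (_, _, _); lia.
      right; apply: (proj2 IH'); left; exists k, a; split => //; lia.
    by right; apply: (proj2 IH'); right.
Qed.

Lemma F_sorted s l : Inv s -> (maxneg s < l)%N ->
  sorted >%R [seq x <- s | x <= - l%:Z].
Proof.
case=> _ _ hsrt _ _ hml.
have -> : [seq x <- s | x <= - l%:Z] =
          [seq x <- [seq x <- s | x < - (maxneg s)%:Z] | x <= - l%:Z].
  by rewrite -filter_predI; apply: eq_filter => x /=; lia.
exact: sorted_filter gt_transitive _ _ hsrt.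
Qed.

Definition valid s p l :=
  if l == (size s).+1 then (p < ys s)%N else (p < xs s)%N.

Lemma Inv_ins s p l : Inv s -> (p <= size s)%N -> (maxneg s < l)%N ->
  (l <= (size s).+1)%N -> valid s p l -> Inv (ins s p l).
Proof.
move=> hI hp hml hln hv; have hI' := hI; case: hI' => hav hlow hsrt hmn hex.
have l0 : (0 < l)%N by lia.
rewrite /Inv size_ins // maxneg_ins //; split => //.
- rewrite /avoids1234 has4 incr_ins //.
  by move: hv; rewrite /valid; case: eqP => _; rewrite ?xsP ?ysP.
- move=> x; rewrite /ins mem_cat inE => /orP [/mapP [v hv' ->]|/orP [/eqP ->|/mapP [v hv' ->]]].
  + have := hlow v (mem_take hv'); have := beta_ge l0 v; lia.
  + lia.
  + have := hlow v (mem_drop hv'); have := beta_ge l0 v; lia.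
- have -> : [seq x <- ins s p l | x < - l%:Z] = map (beta l) [seq x <- s | x <= - l%:Z].
    rewrite /ins filter_cat /= ifN; last lia.
    rewrite -filter_cat -map_cat filter_map cat_take_drop; congr map.
    by apply: eq_filter => y /=; rewrite beta_ltn.
  by apply: sorted_gt_beta => //; apply: F_sorted.
- move=> hlt; have [w ws hw] : exists2 w, w \in s & w <= - (size s)%:Z by apply: hex; lia.
  exists (beta l w).
    move: ws; rewrite -{1}(cat_take_drop p s) mem_cat /ins mem_cat inE => /orP [h|h].
      by rewrite map_f.
    by apply/orP; right; apply/orP; right; rewrite map_f.
  rewrite beta_le_pos //; lia.
Qed.

Definition xnew s p := if p == 0%N then (xs s).+1 else if (p < xs s)%N then p.+1 else xs s.
Definition ynew s p := if (p < xs s)%N then (ys s).+1 else p.+1.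

Lemma lab_ins s p l : Inv s -> (p <= size s)%N -> (maxneg s < l)%N ->
  (l <= (size s).+1)%N -> valid s p l ->
  lab (ins s p l) = ((xnew s p)%:Z, (ynew s p)%:Z, ((size s).+2 - l)%N%:Z).
Proof.
move=> hI hp hml hln hv.
have hpy : (p < ys s)%N.
  move: hv; rewrite /valid; case: eqP => // _ h; exact: leq_trans h (xs_le_ys s).
by rewrite /lab xs_ins // ys_ins // size_ins // maxneg_ins.
Qed.

Lemma suc_lab s L : Inv s ->
  L \in suc (lab s) <->
  (exists k a : nat, [/\ (1 <= k <= (size s).+1 - maxneg s)%N, (2 <= a <= (xs s).+1)%N
                       & L = (a%:Z, (ys s).+1%:Z, k%:Z)])
  \/ (exists b : nat, ((xs s).+1 <= b <= ys s)%N /\ L = ((xs s)%:Z, b%:Z, 1)).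
Proof.
case=> _ _ _ hmn _.
rewrite /suc /lab /=.
have -> : (1 <= ((size s).+1 - maxneg s)%N%:Z) = true by lia.
by apply: mem_sucN; lia.
Qed.

Lemma KA s t : Inv s -> t \in BT_children s -> Inv t /\ lab t \in suc (lab s).
Proof.
move=> hI /(mem_children _ hI) [p [l [hp hml hln hv ->]]].
split; first exact: Inv_ins.
apply: (proj2 (suc_lab _ hI)); rewrite lab_ins //.
have x1 := xs_pos s; have xy := xs_le_ys s.
case: (ltnP p (xs s)) => hpx.
- left; exists ((size s).+2 - l)%N, (xnew s p); split.
  + lia.
  + rewrite /xnew; case: eqP => [_|?]; [|rewrite hpx]; lia.
  + by rewrite /ynew hpx.
- have hl : l = (size s).+1.
    by move: hv; rewrite /valid; case: eqP => // _; rewrite ltnNge hpx.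
  move: hv; rewrite /valid hl eqxx => hpy.
  right; exists p.+1; split; first lia.
  rewrite /xnew /ynew ltnNge hpx /=.
  have -> : (p == 0%N) = false by apply/eqP; lia.
  by congr (_, _, _); rewrite subSn // subnn.
Qed.

Lemma KB s L : Inv s -> L \in suc (lab s) -> exists2 t, t \in BT_children s & lab t = L.
Proof.
move=> hI; have hI' := hI; case: hI' => _ _ _ hmn _.
have x1 := xs_pos s; have xy := xs_le_ys s; have yle := ys_le s.
case/(suc_lab _ hI) => [[k [a [hk ha ->]]] | [b [hb ->]]].
- pose l := ((size s).+2 - k)%N.
  pose p := if a == (xs s).+1 then 0%N else a.-1.
  have hpx : (p < xs s)%N by rewrite /p; case: eqP; lia.
  have hp : (p <= size s)%N by lia.
  have hml : (maxneg s < l)%N by rewrite /l; lia.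
  have hln : (l <= (size s).+1)%N by rewrite /l; lia.
  have hv : valid s p l by rewrite /valid; case: eqP => _; lia.
  exists (ins s p l).
    by apply/(mem_children _ hI); exists p, l; split.
  rewrite lab_ins // /xnew /ynew hpx.
  congr (_, _, _); last by rewrite /l; lia.
  rewrite /xnew; case: (a =P (xs s).+1) => ea.
    have -> : p = 0%N by rewrite /p ea eqxx.
    by rewrite eqxx ea.
  have ep : p = a.-1 by rewrite /p; case: eqP.
  have -> : (p == 0%N) = false by rewrite ep; apply/eqP; lia.
  rewrite ?hpx ep; congr Posz; lia.
- pose l := (size s).+1.
  pose p := b.-1.
  have hp : (p <= size s)%N by rewrite /p; lia.
  have hml : (maxneg s < l)%N by rewrite /l; lia.
  have hv : valid s p l by rewrite /valid /l eqxx /p; lia.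
  exists (ins s p l).
    by apply/(mem_children _ hI); exists p, l; split.
  rewrite lab_ins // /xnew /ynew.
  have -> : (p < xs s)%N = false by rewrite /p; apply/negbTE; lia.
  have -> : (p == 0%N) = false by rewrite /p; apply/negbTE; lia.
  congr (_, _, _); [congr Posz; rewrite /p; lia | rewrite /l; congr Posz; lia].
Qed.

Lemma KC s t1 t2 : Inv s -> t1 \in BT_children s -> t2 \in BT_children s ->
  lab t1 = lab t2 -> t1 = t2.
Proof.
move=> hI /(mem_children _ hI) [p1 [l1 [hp1 hml1 hln1 hv1 ->]]].
move=> /(mem_children _ hI) [p2 [l2 [hp2 hml2 hln2 hv2 ->]]].
rewrite !lab_ins // => -[e1 e2 e3].
have el : l1 = l2 by lia.
subst l2.
suff -> : p1 = p2 by [].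
have x1 := xs_pos s.
move: e1 e2 hv1 hv2; rewrite /xnew /ynew.
by repeat case: ifP; intros; apply/eqP; lia.
Qed.

Lemma no_incr_sorted t k : sorted >%R t -> (1 < k)%N -> ~~ incr t k.
Proof.
move=> ht hk; apply/incrP => -[c [hs hsub hsort]].
have := small_chain hsub hsort ht; rewrite hs; lia.
Qed.

Lemma root_sorted j : sorted >%R (BT_root j).
Proof.
rewrite /BT_root sorted_map; apply: (sub_sorted _ (iota_ltn_sorted 1 j)).
move=> a b /= h; lia.
Qed.

Lemma size_root j : size (BT_root j) = j.
Proof. by rewrite size_map size_iota. Qed.

Lemma mem_root j x : x \in BT_root j -> - j%:Z <= x <= -1.
Proof. by case/mapP => k; rewrite mem_iota => hk ->; lia. Qed.

Lemma maxneg_root j : maxneg (BT_root j) = 0%N.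
Proof.
apply/eqP; rewrite -leqn0; apply: maxneg_le => x /mem_root; lia.
Qed.

Lemma Inv_root j : Inv (BT_root j).
Proof.
have hs := root_sorted j.
rewrite /Inv size_root maxneg_root; split => //.
- rewrite /avoids1234 has4 /full_word; apply/incrP => -[c [hc hsub hsort]].
  have [c1 [c2 [ec h1 h2]]] := subseq_catP hsub; subst c.
  have [s1 s2] := cat_sorted2 hsort.
  have := small_chain h1 s1 hs.
  have := small_chain h2 s2 (sorted_gt_revneg hs).
  by move: hc; rewrite size_cat; move: (size c1) (size c2) => a b; lia.
- by move=> x /mem_root; lia.
- exact: sorted_filter gt_transitive _ _ hs.
- move=> hj; exists (- j%:Z); last lia.
  by apply/mapP; exists j => //; rewrite mem_iota; lia.
Qed.

Lemma lab_root j : lab (BT_root j) = T_root j.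
Proof.
have hs := root_sorted j.
have ht : forall q k, (1 < k)%N -> ~~ incr (take q (BT_root j)) k.
  move=> q k hk; apply: no_incr_sorted => //.
  exact: (subseq_sorted gt_transitive (take_subseq _ _) hs).
rewrite /lab /T_root maxneg_root subn0 size_root.
have hx : xs (BT_root j) = j.+1.
  rewrite /xs size_root; apply: cnt_char => // q hq; rewrite ht //; lia.
have hy : ys (BT_root j) = j.+1.
  rewrite /ys size_root; apply: cnt_char => // q hq; rewrite ht //; lia.
by rewrite hx hy.
Qed.

Definition childof (s : seq int) (L : int * int * int) : seq int :=
  nth [::] (BT_children s) (find (fun t => lab t == L) (BT_children s)).

Fixpoint build (s : seq int) (Ls : seq (int * int * int)) : seq (seq int) :=
  if Ls is L :: Ls' then childof s L :: build (childof s L) Ls' else [::].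

Lemma childof_spec s L : Inv s -> L \in suc (lab s) ->
  childof s L \in BT_children s /\ lab (childof s L) = L.
Proof.
move=> hI hL; have [t ht et] := KB hI hL.
have hh : has (fun t => lab t == L) (BT_children s) by apply/hasP; exists t => //; rewrite et.
split; first by rewrite /childof mem_nth // -has_find.
by apply/eqP; exact: (nth_find [::] hh).
Qed.

Lemma childof_lab s t : Inv s -> t \in BT_children s -> childof s (lab t) = t.
Proof.
move=> hI ht; have [_ hL] := KA hI ht.
have [h1 h2] := childof_spec hI hL.
exact: KC hI h1 ht h2.
Qed.

Lemma build_ok Ls s : Inv s -> path (fun x y => y \in suc x) (lab s) Ls ->
  path (fun x y => y \in BT_children x) s (build s Ls) /\ map lab (build s Ls) = Ls.
Proof.
elim: Ls s => [|L Ls IH] s hI //= /andP [hL hp].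
have [h1 h2] := childof_spec hI hL.
have [hI2 _] := KA hI h1.
rewrite -h2 in hp; have [h3 h4] := IH _ hI2 hp.
by rewrite h1 h3 h4 h2.
Qed.

Lemma build_lab ts s : Inv s -> path (fun x y => y \in BT_children x) s ts ->
  build s (map lab ts) = ts /\ path (fun x y => y \in suc x) (lab s) (map lab ts).
Proof.
elim: ts s => [|t ts IH] s hI //= /andP [ht hp].
have [hI2 hL] := KA hI ht.
have [h1 h2] := IH _ hI2 hp.
by rewrite childof_lab // h1 hL h2.
Qed.

Lemma build_rcons s Ls a :
  build s (rcons Ls a) = rcons (build s Ls) (childof (last s (build s Ls)) a).
Proof. by elim: Ls s => [|L Ls IH] s //=; rewrite IH. Qed.

Theorem proposition2p7 (j : nat) :
  tree_iso (T_root j) suc (BT_root j) BT_children.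
Proof.
pose f (p : seq (int * int * int)) := BT_root j :: build (BT_root j) (behead p).
pose g (q : seq (seq int)) := map lab q.
have hI := Inv_root j; have hl := lab_root j.
have P1 : forall p, is_node (T_root j) suc p -> is_node (BT_root j) BT_children (f p) /\ g (f p) = p.
  move=> [|a Ls] //= /andP [/eqP -> hp].
  rewrite -hl in hp; have [h1 h2] := build_ok hI hp.
  by rewrite eqxx h1 /g /= h2 hl.
have P2 : forall q, is_node (BT_root j) BT_children q -> is_node (T_root j) suc (g q) /\ f (g q) = q.
  move=> [|r ts] //= /andP [/eqP -> hp].
  have [h1 h2] := build_lab hI hp.
  by rewrite -hl eqxx h2 /f /= h1.
exists f, g; split => //.
move=> p q hp hq; split.
- case=> a ->; case: p hp => [|a0 Ls] // _.
  exists (childof (last (BT_root j) (build (BT_root j) Ls)) a).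
  by rewrite /f /= build_rcons.
- case=> b e; exists (lab b).
  have [_ <-] := P1 q hq; have [_ ep] := P1 p hp.
  by rewrite /g e map_rcons -/(g (f p)) ep.
Qed.
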